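(* Let $G=(V,E)$ be a finite simple connected graph with $n=|V|$ vertices and graph distance $d$, and let $\omega\colon V\to(0,\infty)$ be a weight function with total weight $\omega=\omega(V)$. Let $\delta>0$ and $s=\frac{8\ln n}{\delta^2}$. Let $S=\{m_1,\dots,m_s\}$ be a random sample (multiset) of $s$ vertices, drawn independently with $\Pr(m_i=v)=\omega(v)/\omega$, and let $\Phi^{*}(v)=\sum_{u\in S}d(u,v)$ (sum over the multiset, with multiplicity). Let $q$ be a vertex such that for each neighbor $v\in N(q)$ it holds $\Phi^{*}(q)\le \Phi^{*}(v)+\delta s$. Then, with probability at least $1-n^{-3}$, the vertex $q$ is $\delta$-close to a median, i.e. $\Lambda(q)\le\left(\frac12+\delta\right)\omega$.
   Context: For a vertex $q$ and a vertex $v$, a vertex $u$ is consistent with the pair $(q,v)$ if $q=v=u$, or $q\neq v$ and $v$ lies on a shortest path between $u$ and $q$; $N(q,v)$ denotes the set of all vertices consistent with $(q,v)$. $N(q)$ is the set of neighbors of $q$. For $X\subseteq V$, $\omega(X)=\sum_{u\in X}\omega(u)$. Define $\Lambda(v)=\max_{u\in N(v)}\omega(N(v,u))$. A vertex $q$ is $\delta$-close to a median if $\Lambda(q)\le(\frac12+\delta)\omega(V)$. *)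

(* Defs.v *)
From mathcomp Require Import all_boot all_order all_algebra.
From mathcomp Require Import reals exp.
Set Implicit Arguments. Unset Strict Implicit. Unset Printing Implicit Defensive.
Import Order.TTheory GRing.Theory Num.Theory.
Local Open Scope ring_scope.

Section Graph.
Variables (T : finType) (e : rel T).

Definition reach (k : nat) (u v : T) : bool :=
  [exists p : k.-tuple T, path e u p && (last u p == v)].

(* graph distance: length of a shortest walk (= shortest path); for
   connected graphs a shortest path has < #|T| edges. *)
Definition gdist (u v : T) : nat :=
  \big[minn/#|T|]_(k < #|T| | reach k u v) k.

Definition Ncons (q v : T) : {set T} :=
  if q == v then [set q]
  else [set u | gdist u q == (gdist u v + gdist v q)%N].

Variable (R : realType) (w : T -> R).

Definition wt (X : {set T}) : R := \sum_(u in X) w u.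

Definition Lambda (q : T) : R := \big[Num.max/0]_(v | e q v) wt (Ncons q v).

Definition delta_close (delta : R) (q : T) : bool :=
  Lambda q <= (1/2 + delta) * wt [set: T].

Definition Phi_star (s : nat) (S : s.-tuple T) (v : T) : R :=
  \sum_(i < s) (gdist (tnth S i) v)%:R.

(* probability of an event on s i.i.d. samples with Pr(m_i = v) = w v / w(V) *)
Definition sample_prob (s : nat) (P : pred (s.-tuple T)) : R :=
  \sum_(S : s.-tuple T | P S) \prod_(i < s) (w (tnth S i) / wt [set: T]).

End Graph.

(* Main.v *)
Require Import Defs.
From mathcomp Require Import all_boot all_order all_algebra.
From mathcomp Require Import reals exp.
From mathcomp Require Import boolp classical_sets topology normedtype sequences derive realfun.
From mathcomp Require Import ring lra.
Import Order.TTheory GRing.Theory Num.Theory.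
Import numFieldNormedType.Exports.
Local Open Scope ring_scope.
Section S.
Variable R : realType.
Local Open Scope classical_set_scope.

Lemma deriv_nincr (f df : R -> R) :
  (forall x : R, is_derive x (1:R) f (df x)) -> (forall x, 0 <= x -> df x <= 0) ->
  forall h, 0 <= h -> f h <= f 0.
Proof.
move=> fd dfle h h0.
have fd' : forall x, x \in `]0, h[%R -> is_derive x 1 f (df x) by move=> x xin; exact: fd.
have fc : {within `[0, h], continuous f}.
  apply/continuous_subspaceT=> r.
  apply/differentiable_continuous/derivable1_diffP.
  by have [] := fd r.
have [c cin E] := @MVT_segment R f df 0 h h0 fd' fc.
rewrite -subr_le0 E subr0.
apply: mulr_le0_ge0 => //; apply: dfle.
by move: cin; rewrite in_itv /= => /andP[].
Qed.

Lemma J2 (k : R) : 0 <= k -> 2 * (1 - expR (- k)) <= k * (1 + expR (- k)).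
Proof.
move=> k0.
pose f := fun x : R => 2 * (1 - expR (- x)) - x * (1 + expR (- x)).
have fd : forall x : R, is_derive x (1:R) f ((x + 1) * expR (- x) - 1).
  move=> x.
  have e1 : is_derive x 1 (fun y : R => expR (- y)) (- expR (- x)).
    have := @is_derive1_comp R expR (fun y => - y) x (expR (- x)) (-1).
    by rewrite mulrN1; apply.
  rewrite /f.
  apply: is_derive_eq.
  rewrite -[_%:A]/((1 + expR (- x)) * 1) -[x *: _]/(x * _) -[2 *: _]/(2 * _).
  ring.
have := @deriv_nincr _ _ fd _ k.
rewrite /f oppr0 expR0 => H.
have : 2 * (1 - expR (- k)) - k * (1 + expR (- k)) <= 0.
  have -> : (0:R) = 2 * (1 - 1) - 0 * (1 + 1) by ring.
apply: H => // x x0.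
  rewrite subr_le0 expRN -(ler_pM2r (expR_gt0 x)) mulfVK ?mul1r ?expR_eq0 //.
  by rewrite addrC expR_ge1Dx.
by rewrite subr_le0.
Qed.

End S.
Section T.
Variable R : realType.
Local Open Scope classical_set_scope.
Lemma hoeff (p h : R) : 0 <= p -> p <= 1 -> 0 <= h ->
  (1 - p + p * expR (- h)) * expR (h * p) <= expR (h * h / 8).
Proof.
move=> p0 p1 h0.
pose M := fun x : R => (1 - p + p * expR (- x)) * expR (x * p - x * x / 8).
have Md : forall x : R, is_derive x 1 M
   ((p * (1 - p) * (1 - expR (- x)) - x / 4 * (1 - p + p * expR (- x))) * expR (x * p - x * x / 8)).
  move=> x.
  have e1 : is_derive x 1 (fun y : R => expR (- y)) (- expR (- x)).
    have := @is_derive1_comp R expR (fun y => - y) x (expR (- x)) (-1).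
    by rewrite mulrN1; apply.
  have e2 : is_derive x 1 (fun y : R => expR (y * p - y * y / 8)) (expR (x * p - x * x / 8) * (p - x / 4)).
    apply: (@is_derive1_comp R expR (fun y => y * p - y * y / 8) x).
    apply: is_derive_eq.
    rewrite /GRing.scale /=.
    by field.
  rewrite /M.
  apply: is_derive_eq.
  rewrite /GRing.scale /=.
  ring.
have := @deriv_nincr R _ _ Md _ h.
rewrite /M oppr0 expR0 !mul0r subrr expR0 mulr1 => H.
have : (1 - p + p * expR (- h)) * expR (h * p - h * h / 8) <= 1.
  have E1 : (1 - p + p) * 1 = 1 :> R by ring.
  rewrite -[X in _ <= X]E1.
  apply: H => // x x0.
  apply: mulr_le0_ge0; last exact: expR_ge0.
  pose y := expR (- (x / 2)).
  have y0 : 0 <= y by exact: expR_ge0.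
  have yy : expR (- x) = y * y.
    by rewrite /y -expRD; congr expR; field.
  have A : 2 * (1 - y) <= x / 2 * (1 + y).
    by apply: J2; rewrite divr_ge0.
  have B : (1 + y) ^+ 2 * (p * (1 - p)) <= 1 - p + p * (y * y).
    rewrite -subr_ge0.
    have -> : 1 - p + p * (y * y) - (1 + y) ^+ 2 * (p * (1 - p)) = (1 - p - y * p) ^+ 2 by ring.
    exact: sqr_ge0.
  have C : 0 <= (1 + y) * (p * (1 - p)).
    by rewrite mulr_ge0 // ?mulr_ge0 // ?subr_ge0 // addr_ge0.
  rewrite yy subr_le0.
  have D : p * (1 - p) * (1 - y * y) = (1 - y) * ((1 + y) * (p * (1 - p))) by ring.
  rewrite D.
  have E : (1 - y) * ((1 + y) * (p * (1 - p))) <= x / 4 * (1 + y) * ((1 + y) * (p * (1 - p))).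
    apply: ler_wpM2r => //.
    have -> : x / 4 * (1 + y) = (x / 2 * (1 + y)) / 2 by field.
    by rewrite ler_pdivlMr //; rewrite mulrC.
  apply: (le_trans E).
  have -> : x / 4 * (1 + y) * ((1 + y) * (p * (1 - p))) = x / 4 * ((1 + y) ^+ 2 * (p * (1 - p))) by ring.
  by apply: ler_wpM2l => //; rewrite divr_ge0.
move=> H1.
have -> : expR (h * p) = expR (h * p - h * h / 8) * expR (h * h / 8) by rewrite -expRD; congr expR; ring.
rewrite mulrA -{2}(mul1r (expR (h * h / 8))).
by apply: ler_wpM2r => //; exact: expR_ge0.
Qed.
End T.

Section Graph.
Variables (T : finType) (e : rel T).

Lemma reach0 u v : reach e 0 u v = (u == v).
Proof.
apply/existsP/eqP => [[p /andP[_ /eqP]]|->].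
  by rewrite (tuple0 p) /=.
by exists [tuple]; rewrite /= eqxx.
Qed.

Lemma reachS k u v v' : reach e k u v -> e v v' -> reach e k.+1 u v'.
Proof.
move=> /existsP[p /andP[pp /eqP pl]] evv'.
have sz : size (rcons p v') == k.+1 by rewrite size_rcons size_tuple.
apply/existsP; exists (Tuple sz).
by rewrite /= rcons_path pp pl evv' last_rcons eqxx.
Qed.

Lemma gdist_le u v : (gdist e u v <= #|T|)%N.
Proof.
rewrite /gdist; apply: (big_ind (fun m => m <= #|T|)%N) => //.
  by move=> x y hx hy; rewrite geq_min hx.
by move=> k _; exact: ltnW (ltn_ord k).
Qed.

Lemma gdist_min k u v : (k < #|T|)%N -> reach e k u v -> (gdist e u v <= k)%N.
Proof.
move=> kT r; rewrite /gdist.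
have : Ordinal kT \in index_enum 'I_#|T| by rewrite mem_index_enum.
elim: (index_enum _) => // i l IH.
rewrite inE big_cons => /orP[/eqP <-|il].
  by rewrite r /=; exact: geq_minl.
case: ifP => _; last exact: IH.
exact: leq_trans (geq_minr _ _) (IH il).
Qed.

Lemma gdist_spec u v : gdist e u v = #|T| \/ reach e (gdist e u v) u v.
Proof.
rewrite /gdist; apply: (big_ind (fun m => m = #|T| \/ reach e m u v)).
- by left.
- by move=> x y hx hy; rewrite /minn; case: ifP.
- by move=> i ri; right.
Qed.

Hypothesis e_irr : irreflexive e.

Lemma dist_diff (R : realType) q v u : e q v ->
  (if u \in Ncons e q v then 1 else -1) <= ((gdist e u q)%:R - (gdist e u v)%:R : R).
Proof.
move=> eqv.
have qv : q != v by apply/eqP => E; move: eqv; rewrite E e_irr.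
case: ifP => uN.
  move: uN; rewrite /Ncons (negbTE qv) inE => /eqP ->.
  rewrite natrD addrAC subrr add0r ler1n lt0n.
  apply/eqP => E0.
  case: (gdist_spec v q); rewrite E0.
    move=> c0; have : (0 < #|T|)%N by apply/card_gt0P; exists q.
    by rewrite -c0.
  by rewrite reach0 eq_sym (negbTE qv).
have Hn : (gdist e u v <= gdist e u q + 1)%N.
  case: (gdist_spec u q) => [E|r].
    by rewrite E; apply: leq_trans (gdist_le u v) (leq_addr _ _).
  case: (ltnP (gdist e u q).+1 #|T|) => h.
    rewrite addn1; exact: (gdist_min _ _ _ h (reachS _ _ _ _ r eqv)).
  by rewrite addn1; apply: leq_trans (gdist_le u v) h.
have : ((gdist e u v)%:R <= ((gdist e u q + 1)%N)%:R :> R) by rewrite ler_nat.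
rewrite natrD.
lra.
Qed.

End Graph.

Section Prob.
Variables (T : finType) (R : realType).

Lemma sum_tuple_prod s (g : T -> R) :
  \sum_(S : s.-tuple T) \prod_(i < s) g (tnth S i) = (\sum_x g x) ^+ s.
Proof.
have -> : (\sum_x g x) ^+ s = \prod_(i < s) \sum_x g x by rewrite prodr_const card_ord.
rewrite bigA_distr_bigA /=.
rewrite (reindex (fun S : s.-tuple T => [ffun i => tnth S i])) /=.
  by apply: eq_bigr => S _; apply: eq_bigr => i _; rewrite ffunE.
exists (fun f : {ffun 'I_s -> T} => [tuple f i | i < s]) => [S _ | f _].
  by apply: eq_from_tnth => i; rewrite tnth_mktuple ffunE.
by apply/ffunP => i; rewrite ffunE tnth_mktuple.
Qed.

Lemma union_bound s (P : pred (s.-tuple T)) (Q : T -> pred (s.-tuple T))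
  (f : s.-tuple T -> R) : (forall S, 0 <= f S) ->
  (forall S, P S -> exists q, Q q S) ->
  \sum_(S | P S) f S <= \sum_q \sum_(S | Q q S) f S.
Proof.
move=> f0 PQ.
under [X in _ <= X]eq_bigr do rewrite big_mkcond.
rewrite exchange_big /= big_mkcond /=.
apply: ler_sum => S _; case: ifP => PS.
  have [q Qq] := PQ S PS.
  rewrite (bigD1 q) //= Qq lerDl.
  by apply: sumr_ge0 => i _; case: ifP.
by apply: sumr_ge0 => i _; case: ifP.
Qed.

Variable (w : T -> R).
Hypothesis w_pos : forall v, 0 < w v.

Lemma wt_setT : wt w [set: T] = \sum_x w x.
Proof. by rewrite /wt; apply: eq_bigl => x; rewrite finset.in_setT. Qed.

Lemma W_gt0 (x : T) : 0 < wt w [set: T].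
Proof.
rewrite wt_setT (bigD1 x) //=; apply: ltr_pwDl => //.
by apply: sumr_ge0 => i _; exact: ltW.
Qed.

Lemma sum_pi (x : T) : \sum_y (w y / wt w [set: T]) = 1.
Proof.
by rewrite -mulr_suml -wt_setT divff // gt_eqF // (W_gt0 x).
Qed.

Lemma wt_le (A : {set T}) : wt w A <= wt w [set: T].
Proof.
rewrite wt_setT /wt [X in _ <= X](bigID (mem A)) /= lerDl.
by apply: sumr_ge0 => i _; exact: ltW.
Qed.

Lemma chernoff s (A : {set T}) (lam c : R) (x0 : T) : 0 <= lam ->
  \sum_(S : s.-tuple T | ((\sum_(i < s) (tnth S i \in A))%N)%:R <= c)
     \prod_(i < s) (w (tnth S i) / wt w [set: T])
  <= expR (lam * c) *
     (1 - wt w A / wt w [set: T] + wt w A / wt w [set: T] * expR (- lam)) ^+ s.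
Proof.
move=> lam0.
set W := wt w [set: T].
have pi0 : forall y, 0 <= w y / W by move=> y; rewrite divr_ge0 // ltW // ?(W_gt0 x0).
apply: (@le_trans _ _ (\sum_(S : s.-tuple T) \prod_(i < s) (w (tnth S i) / W) *
     expR (lam * (c - ((\sum_(i < s) (tnth S i \in A))%N)%:R)))).
  rewrite [X in X <= _]big_mkcond /=; apply: ler_sum => S _.
  have P0 : 0 <= \prod_(i < s) (w (tnth S i) / W) by apply: prodr_ge0.
  case: ifP => h.
    rewrite ler_peMr //.
    apply: le_trans (expR_ge1Dx _); rewrite lerDl mulr_ge0 //.
    by rewrite subr_ge0.
  by rewrite mulr_ge0 // expR_ge0.
have E : forall S : s.-tuple T,
   \prod_(i < s) (w (tnth S i) / W) *
     expR (lam * (c - ((\sum_(i < s) (tnth S i \in A))%N)%:R))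
   = expR (lam * c) * \prod_(i < s) (w (tnth S i) / W * expR (- lam * (tnth S i \in A)%:R)).
  move=> S.
  rewrite [in RHS]big_split /= mulrCA; congr (_ * _).
  rewrite mulrBr expRD; congr (_ * _).
  by rewrite natr_sum -mulNr mulr_sumr expR_sum.
rewrite (eq_bigr _ (fun S _ => E S)) -mulr_sumr.
rewrite (sum_tuple_prod s (fun y => w y / W * expR (- lam * (y \in A)%:R))).
apply: ler_wpM2l; first exact: expR_ge0.
apply: lerXn2r; rewrite ?nnegrE.
- by apply: sumr_ge0 => y _; rewrite mulr_ge0 // expR_ge0.
- have p0 : 0 <= wt w A / W.
    by rewrite divr_ge0 // ?(ltW (W_gt0 x0)) // /wt; apply: sumr_ge0 => i _; exact: ltW.
  have p1 : wt w A / W <= 1 by rewrite ler_pdivrMr ?mul1r ?wt_le // (W_gt0 x0).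
  by rewrite addr_ge0 ?subr_ge0 // mulr_ge0 // expR_ge0.
rewrite (bigID (mem A)) /=.
have h1 : \sum_(i in A) w i / W * expR (- lam * (i \in A)%:R) = wt w A / W * expR (- lam).
  rewrite /wt mulr_suml mulr_suml; apply: eq_bigr => i iA.
  by rewrite iA mulr1.
have h2 : \sum_(i | i \notin A) w i / W * expR (- lam * (i \in A)%:R) = 1 - wt w A / W.
  have := sum_pi x0; rewrite (bigID (mem A)) /= => H.
  rewrite -H /wt mulr_suml addrAC subrr add0r.
  by apply: eq_bigr => i /negbTE ->; rewrite mulr0 expR0 mulr1.
by rewrite h1 h2 addrC.
Qed.

End Prob.

Lemma phi_diff (T : finType) (e : rel T) (R : realType) (e_irr : irreflexive e)
  s (S : s.-tuple T) q v : e q v ->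
  2 * ((\sum_(i < s) (tnth S i \in Ncons e q v))%N)%:R - s%:R
    <= Phi_star e R S q - Phi_star e R S v.
Proof.
move=> eqv.
rewrite /Phi_star -sumrB.
apply: le_trans (ler_sum _ (fun i _ => dist_diff _ _ e_irr R q v (tnth S i) eqv)).
have -> : (s%:R : R) = \sum_(i < s) (1 : R) by rewrite sumr_const card_ord.
rewrite natr_sum mulr_sumr -sumrB; apply: ler_sum => i _.
by case: ifP => _ /=; rewrite ?mulr1n ?mulr0n; lra.
Qed.

Theorem theorem4 (T : finType) (e : rel T)
  (e_sym : symmetric e) (e_irr : irreflexive e)
  (e_conn : forall u v : T, connect e u v)
  (R : realType) (w : T -> R) (w_pos : forall v, 0 < w v)
  (delta : R) (delta_pos : 0 < delta)
  (s : nat) (hs : s = `|Num.ceil (8 * ln (#|T|%:R) / delta ^+ 2)|%N) :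
  1 - (#|T|%:R) ^- 3 <=
  sample_prob w
    (fun S : s.-tuple T =>
       [forall q : T,
          [forall v : T, e q v ==>
             (Phi_star e R S q <= Phi_star e R S v + delta * s%:R)]
          ==> delta_close e w delta q]).
Proof.
set n := #|T|.
set W := wt w [set: T].
set good := (fun S : s.-tuple T => _).
rewrite /sample_prob -/W.
set f := fun S : s.-tuple T => \prod_(i < s) (w (tnth S i) / W).
have W0 : 0 <= W by rewrite /W /wt; apply: sumr_ge0 => i _; exact: ltW.
have f0 : forall S, 0 <= f S.
  by move=> S; apply: prodr_ge0 => i _; rewrite divr_ge0 // ltW.
have total : \sum_S f S = 1.
  rewrite /f (sum_tuple_prod _ _ s (fun y => w y / W)).
  case: (pickP (fun _ : T => true)) => [x0 _|none].
    by rewrite /W (@sum_pi T R w w_pos x0) expr1n.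
  have n0 : n = 0%N by rewrite /n; apply: eq_card0.
  have -> : s = 0%N.
    by rewrite hs -/n n0 ln0 // mulr0 mul0r ceil0.
  by rewrite expr0.
have -> : \sum_(S | good S) f S = \sum_S f S - \sum_(S | ~~ good S) f S.
  by rewrite (bigID good predT) /= addrK.
rewrite total lerD2l lerN2.
set c0 := (1/2 + delta) * W.
pose Q := fun q (S : s.-tuple T) =>
  if [pick v | e q v && (c0 < wt w (Ncons e q v))] is Some v then
    ((\sum_(i < s) (tnth S i \in Ncons e q v))%N)%:R <= (1 + delta) / 2 * s%:R
  else false.
apply: (le_trans (@union_bound T R s (fun S => ~~ good S) Q f f0 _)).
  move=> S /forallPn [q]; rewrite negb_imply => /andP [cnd ndc].
  exists q; rewrite /Q; case: pickP => [v /andP[eqv big] | none].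
    have := forallP cnd v; rewrite eqv /= => hphi.
    have := phi_diff _ _ R e_irr s S q v eqv.
    lra.
  move: ndc; rewrite /delta_close /Lambda -/W -/c0.
  suff -> : \big[Num.max/0]_(v | e q v) wt w (Ncons e q v) <= c0 by [].
  apply: bigmax_le => [|v eqv].
    by rewrite /c0; apply: mulr_ge0 => //; lra.
  have := none v; rewrite eqv /= => /negbT.
  by rewrite -leNgt.
have perq : forall q, \sum_(S | Q q S) f S <= (n%:R ^+ 4)^-1.
  move=> q.
  have nT : (0 < n)%N by apply/card_gt0P; exists q.
  have n0 : (0 : R) < n%:R by rewrite ltr0n.
  have Wp : 0 < W by exact: (@W_gt0 T R w w_pos q).
  rewrite /Q; case: pickP => [v /andP[eqv big] | _]; last first.
    by rewrite big_pred0 // invr_ge0 exprn_ge0 // ltW.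
  set N := Ncons e q v.
  apply: le_trans (@chernoff T R w w_pos s N (2 * delta) ((1 + delta) / 2 * s%:R) q _) _.
    by rewrite mulr_ge0 // ltW.
  rewrite -/W.
  set p := wt w N / W.
  have p0 : 0 <= p.
    apply: divr_ge0; last exact: ltW.
    by rewrite /wt; apply: sumr_ge0 => i _; exact: ltW.
  have p1 : p <= 1 by rewrite ler_pdivrMr ?mul1r ?(@wt_le T R w w_pos).
  have pbig : 1/2 + delta < p by rewrite ltr_pdivlMr.
  set base := 1 - p + p * expR (- (2 * delta)).
  have b0 : 0 <= base by rewrite /base addr_ge0 ?subr_ge0 // mulr_ge0 // expR_ge0.
  have h0 : 0 <= 2 * delta by lra.
  have H := @hoeff R p (2 * delta) p0 p1 h0.
  have -> : expR (2 * delta * ((1 + delta) / 2 * s%:R)) = expR (delta * (1 + delta)) ^+ s.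
    by rewrite -expRM_natr; congr expR; field.
  rewrite -exprMn.
  have inner : expR (delta * (1 + delta)) * base <= expR (- (delta ^+ 2 / 2)).
    have -> : expR (delta * (1 + delta)) * base =
      (base * expR (2 * delta * p)) * expR (delta * (1 + delta) - 2 * delta * p).
      rewrite -mulrA mulrC; congr (_ * _).
      rewrite -[expR (2 * delta * p) * _]expRD; congr expR; ring.
    apply: le_trans (ler_wpM2r (expR_ge0 _) H) _.
    rewrite -expRD ler_expR.
    have hh : 0 < delta * (p - (1/2 + delta)) by rewrite mulr_gt0 // subr_gt0.
    lra.
  apply: le_trans (lerXn2r _ _ _ inner) _; rewrite ?nnegrE ?mulr_ge0 ?expR_ge0 //.
  rewrite -expRM_natr.
  have sx : 8 * ln n%:R / delta ^+ 2 <= s%:R.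
    rewrite hs -/n natr_absz ger0_norm ?ceil_ge //.
    have x0 : 0 <= 8 * ln (n%:R : R) / delta ^+ 2.
      apply: divr_ge0; last by rewrite exprn_ge0 // ltW.
      by apply: mulr_ge0 => //; apply: ln_ge0; rewrite ler1n.
    rewrite ceil_ge0; lra.
  have sx' : 8 * ln n%:R <= delta ^+ 2 * s%:R.
    have dz : delta != 0 by rewrite gt_eqF.
    have := ler_wpM2l (exprn_ge0 2 (ltW delta_pos)) sx.
    have -> : delta ^+ 2 * (8 * ln (n%:R : R) / delta ^+ 2) = 8 * ln n%:R by field.
    done.
  have -> : (n%:R ^+ 4)^-1 = expR (- (ln n%:R * 4%:R)) :> R.
    by rewrite expRN expRM_natr lnK // posrE.
  rewrite ler_expR; lra.
apply: le_trans (ler_sum _ (fun q _ => perq q)) _.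
rewrite sumr_const -/n.
case: (posnP n) => [->|nP]; first by rewrite mulr0n expr0n /= invr0.
have nz : (n%:R : R) != 0 by rewrite pnatr_eq0 -lt0n.
have -> : (n%:R ^+ 4)^-1 *+ n = n%:R ^- 3 :> R.
  by rewrite -mulr_natr; field.
done.
Qed.
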